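(* Let $E$ be the elliptic curve $Y^2+11Y=X^3+11X^2+33X$ over $\mathbb{Q}$, and let $j:E\to\mathbb{P}^1$ be the rational function $$j(X,Y)=\frac{h(X,Y)}{(XY-11)^{11}},$$ where $h(X,Y)=(X^2+11X+22)^3\big((11X^2+88X+121)Y+2X^4+55X^3+451X^2+1452X+1452\big)^3 g(X,Y)$ and $g(X,Y)=(6750X^8+337590X^7+5159935X^6+36807958X^5+145636931X^4+341425458X^3+474292533X^2+362189058X+117523307)Y+51975X^9+1746052X^8+24440064X^7+188870352X^6+892661770X^5+2692703508X^4+5217583888X^3+6299026712X^2+4320837279X+1288408000$. Then for every rational point $(x,y)\in E(\mathbb{Q})$ (affine), $j(x,y)\in\mathbb{Z}$ if and only if $\frac{x}{xy-11}\in\mathbb{Z}$.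
   Context: Under an isomorphism (Halberstadt's) between $E$ and the modular curve $X_{ns}(11)$ (normalizer of a non-split Cartan subgroup of level $11$) sending the cusps to the zeros of $Y-11/X$, the function $j$ above is the natural $j$-invariant map of degree $55$. The statement to prove concerns only the explicit rational function given. Here $j(x,y)\in\mathbb{Z}$ means the value is finite and integral; similarly for $x/(xy-11)$. *)

(* Defs.v *)
From HB Require Import structures.
From mathcomp Require Import all_boot all_order all_algebra.
From Stdlib Require Import BinNums NArith.
Set Implicit Arguments. Unset Strict Implicit. Unset Printing Implicit Defensive.
Import Order.TTheory GRing.Theory Num.Theory.
Local Open Scope ring_scope.


(* Binary-encoded nonnegative integer constants as rationals (the unary
   nat numerals of ring_scope are too large for these coefficients). *)
Fixpoint posq (p : BinNums.positive) : rat :=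
  match p with
  | BinNums.xH => 1
  | BinNums.xO p => 2 * posq p
  | BinNums.xI p => 2 * posq p + 1
  end.
Definition nq (n : N) : rat := match n with BinNums.N0 => 0 | BinNums.Npos p => posq p end.

Definition onE (x y : rat) : Prop :=
  y ^+ 2 + 11 * y = x ^+ 3 + 11 * x ^+ 2 + 33 * x.

Definition g_poly (X Y : rat) : rat :=
  ((nq 6750) * X ^+ 8 + (nq 337590) * X ^+ 7 + (nq 5159935) * X ^+ 6 + (nq 36807958) * X ^+ 5
   + (nq 145636931) * X ^+ 4 + (nq 341425458) * X ^+ 3 + (nq 474292533) * X ^+ 2
   + (nq 362189058) * X + (nq 117523307)) * Y
  + (nq 51975) * X ^+ 9 + (nq 1746052) * X ^+ 8 + (nq 24440064) * X ^+ 7 + (nq 188870352) * X ^+ 6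
  + (nq 892661770) * X ^+ 5 + (nq 2692703508) * X ^+ 4 + (nq 5217583888) * X ^+ 3
  + (nq 6299026712) * X ^+ 2 + (nq 4320837279) * X + (nq 1288408000).

Definition h_poly (X Y : rat) : rat :=
  (X ^+ 2 + 11 * X + 22) ^+ 3
  * ((11 * X ^+ 2 + 88 * X + 121) * Y
     + 2 * X ^+ 4 + 55 * X ^+ 3 + 451 * X ^+ 2 + (nq 1452) * X + (nq 1452)) ^+ 3
  * g_poly X Y.

Definition j_val (X Y : rat) : rat := h_poly X Y / (X * Y - 11) ^+ 11.

(* "j(x,y) is finite and integral". *)
Definition j_integral (x y : rat) : Prop :=
  x * y - 11 <> 0 /\ j_val x y \is a Num.int.

Definition u_integral (x y : rat) : Prop :=
  x * y - 11 <> 0 /\ x / (x * y - 11) \is a Num.int.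

(* Main.v *)
From Stdlib Require Import ZArith Znumtheory Lia.
From mathcomp Require Import zify.
Require Import Defs.
From HB Require Import structures.
From mathcomp Require Import all_boot all_order all_algebra.
From mathcomp Require Import ssrZ.
From mathcomp Require Import ring.
Import Order.TTheory GRing.Theory Num.Theory.
Open Scope Z_scope.
Definition Ez (a b d : Z) : Z := b^2 + 11*b*d^3 - a^3 - 11*a^2*d^2 - 33*a*d^4.
Definition Tz (a b d : Z) : Z := a*b - 11*d^5.
Definition F1z (a b d : Z) : Z := (a^2 + 11*a*d^2 + 22*d^4).
Definition F2z (a b d : Z) : Z := (2*a^4 + 55*a^3*d^2 + 11*a^2*b*d + 451*a^2*d^4 + 88*a*b*d^3 + 1452*a*d^6 + 121*b*d^5 + 1452*d^8).
Definition Gz (a b d : Z) : Z := (51975*a^9*d + 6750*a^8*b + 1746052*a^8*d^3 + 337590*a^7*b*d^2 + 24440064*a^7*d^5 + 5159935*a^6*b*d^4 + 188870352*a^6*d^7 + 36807958*a^5*b*d^6 + 892661770*a^5*d^9 + 145636931*a^4*b*d^8 + 2692703508*a^4*d^11 + 341425458*a^3*b*d^10 + 5217583888*a^3*d^13 + 474292533*a^2*b*d^12 + 6299026712*a^2*d^15 + 362189058*a*b*d^14 + 4320837279*a*d^17 + 117523307*b*d^16 + 1288408000*d^19).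
Lemma cert_F1 (a b d : Z) : 121 * d^12 = (8*a^3 + 67*a^2*d^2) * Ez a b d + (8*a^4 + 67*a^3*d^2 + 88*a^2*d^4 - 231*a*d^6 - 363*d^8) * F1z a b d + (- 8*a^2*b - 88*a^2*d^3 - 67*a*b*d^2 - 825*a*d^5 - 737*d^7) * Tz a b d.
Proof. unfold Ez, F1z, Tz. ring. Qed.

Lemma cert_F2 (a b d : Z) : 1331 * d^18 = (132*a^6 + 3354*a^5*d^2 + 22748*a^4*d^4 + 56144*a^3*d^6 + 41877*a^2*d^8) * Ez a b d + (66*a^5 + 588*a^4*d^2 + 946*a^3*d^4 - 1991*a^2*d^6 - 3806*a*d^8) * F2z a b d + (- 726*a^6*d - 132*a^5*b - 13728*a^5*d^3 - 3354*a^4*b*d^2 - 108482*a^4*d^5 - 22748*a^3*b*d^4 - 419617*a^3*d^7 - 56144*a^2*b*d^6 - 765204*a^2*d^9 - 41877*a*b*d^8 - 502392*a*d^11 - 121*d^13) * Tz a b d.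
Proof. unfold Ez, F2z, Tz. ring. Qed.

Lemma cert_G (a b d : Z) : 161051 * d^29 = (- 4717562850*a^11*d - 144514082482*a^10*d^3 - 1797564675357*a^9*d^5 - 12168634370123*a^8*d^7 - 50267175423113*a^7*d^9 - 133035637526572*a^6*d^11 - 227550244686479*a^5*d^13 - 244080838286351*a^4*d^15 - 149668776051080*a^3*d^17 - 40111057247690*a^2*d^19) * Ez a b d + (- 90766*a^5 - 729680*a^4*d^2 - 842207*a^3*d^4 + 2451108*a^2*d^6 + 3754333*a*d^8) * Gz a b d + (612670500*a^12 + 35567033940*a^11*d^2 + 4717562850*a^10*b*d + 772257420010*a^10*d^4 + 144514082482*a^9*b*d^3 + 9015336267410*a^9*d^6 + 1797564675357*a^8*b*d^5 + 64932700887890*a^8*d^8 + 12168634370123*a^7*b*d^7 + 307971305081044*a^7*d^10 + 50267175423113*a^6*b*d^9 + 992038920150212*a^6*d^12 + 133035637526572*a^5*b*d^11 + 2187676902618647*a^5*d^14 + 227550244686479*a^4*b*d^13 + 3257206220429007*a^4*d^16 + 244080838286351*a^3*b*d^15 + 3134367393337818*a^3*d^18 + 149668776051080*a^2*b*d^17 + 1761808103658537*a^2*d^20 + 40111057247690*a*b*d^19 + 439737515624000*a*d^22 - 14641*d^24) * Tz a b d.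
Proof. unfold Ez, Gz, Tz. ring. Qed.

Lemma div11_F1 (a b d : Z) : F1z (11*a) (11*b) d = 11 * (11*a^2 + 11*a*d^2 + 2*d^4).
Proof. unfold F1z. ring. Qed.

Lemma div11_F2 (a b d : Z) : F2z (11*a) (11*b) d = 121 * (242*a^4 + 605*a^3*d^2 + 121*a^2*b*d + 451*a^2*d^4 + 88*a*b*d^3 + 132*a*d^6 + 11*b*d^5 + 12*d^8).
Proof. unfold F2z. ring. Qed.

Lemma div11_G (a b d : Z) : Gz (11*a) (11*b) d = 121 * (1012845712725*a^9*d + 131538404250*a^8*b + 3093237627172*a^8*d^3 + 598061277990*a^7*b*d^2 + 3936096747264*a^7*d^5 + 831012691685*a^6*b*d^4 + 2765250823632*a^6*d^7 + 538905313078*a^5*b*d^6 + 1188132815870*a^5*d^9 + 193842755161*a^4*b*d^8 + 325817124468*a^4*d^11 + 41312480418*a^3*b*d^10 + 57393422768*a^3*d^13 + 5217217863*a^2*b*d^12 + 6299026712*a^2*d^15 + 362189058*a*b*d^14 + 392803389*a*d^17 + 10683937*b*d^16 + 10648000*d^19).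
Proof. unfold Gz. ring. Qed.


Definition Hz (a b d : Z) : Z := F1z a b d ^ 3 * F2z a b d ^ 3 * Gz a b d.

Lemma prime11 : Znumtheory.prime 11.
Proof.
  apply prime_intro; [lia|]. intros n Hn. apply Zgcd_1_rel_prime.
  assert (n = 1 \/ n = 2 \/ n = 3 \/ n = 4 \/ n = 5 \/ n = 6 \/ n = 7 \/ n = 8 \/ n = 9 \/ n = 10) as H by lia.
  repeat destruct H as [H|H]; subst; reflexivity.
Qed.

Lemma rel_prime_pow a b (n : nat) : rel_prime a b -> rel_prime a (b ^ Z.of_nat n).
Proof.
  intros H. induction n as [|n IH].
  - simpl. apply rel_prime_sym, rel_prime_1.
  - rewrite Nat2Z.inj_succ Z.pow_succ_r; last lia. apply rel_prime_mult; assumption.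
Qed.

Lemma prime_pow_div p a (n : nat) : Znumtheory.prime p -> (p | a ^ Z.of_nat n) -> (p | a).
Proof.
  intros Hp. induction n as [|n IH].
  - simpl. intros H. pose proof (prime_ge_2 p Hp). apply Z.divide_1_r in H. lia.
  - rewrite Nat2Z.inj_succ Z.pow_succ_r; last lia. intros H.
    destruct (prime_mult p Hp _ _ H); auto.
Qed.

Lemma cong_mul t x1 y1 x2 y2 : (t | x1 - y1) -> (t | x2 - y2) -> (t | x1*x2 - y1*y2).
Proof.
  intros H1 H2. replace (x1*x2 - y1*y2) with ((x1-y1)*x2 + y1*(x2-y2)) by ring.
  apply Z.divide_add_r; [apply Z.divide_mul_l|apply Z.divide_mul_r]; assumption.
Qed.

Lemma cong_cert t N W B F A E C : N * W = A * E + B * F + C * t -> E = 0 -> (t | N*W - B*F).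
Proof. intros H HE. exists C. rewrite H HE. ring. Qed.

Lemma relT a b d : rel_prime a d -> rel_prime b d -> rel_prime (Tz a b d) d.
Proof.
  intros Ha Hb. apply rel_prime_sym. apply Zgcd_1_rel_prime.
  unfold Tz. replace (a*b - 11*d^5) with (a*b + (-11*d^4)*d) by ring.
  rewrite Z.gcd_add_mult_diag_r. apply Zgcd_1_rel_prime.
  apply rel_prime_mult; apply rel_prime_sym; assumption.
Qed.

Lemma eleven_ab a b d : Ez a b d = 0 -> (11 | Tz a b d) -> (11 | a) /\ (11 | b).
Proof.
  intros HE HT.
  assert (Hab : (11 | a*b)).
  { unfold Tz in HT. replace (a*b) with ((a*b - 11*d^5) + 11*d^5) by ring.
    apply Z.divide_add_r; [assumption| apply Z.divide_mul_l; apply Z.divide_refl]. }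
  destruct (prime_mult 11 prime11 _ _ Hab) as [[k Hk]|[k Hk]]; subst.
  - split; [exists k; reflexivity|].
    assert (H : (11 | b*b)).
    { exists (- b*d^3 + 121*k^3 + 121*k^2*d^2 + 33*k*d^4).
      transitivity (Ez (k*11) b d + (- b*d^3 + 121*k^3 + 121*k^2*d^2 + 33*k*d^4)*11).
      - unfold Ez. ring.
      - rewrite HE. ring. }
    destruct (prime_mult 11 prime11 _ _ H); assumption.
  - split; [|exists k; reflexivity].
    assert (H : (11 | a^Z.of_nat 3)).
    { exists (11*k^2 + 11*k*d^3 - a^2*d^2 - 3*a*d^4). change (Z.of_nat 3) with 3.
      transitivity (- Ez a (k*11) d + (11*k^2 + 11*k*d^3 - a^2*d^2 - 3*a*d^4)*11).
      - unfold Ez. ring.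
      - rewrite HE. ring. }
    apply (prime_pow_div 11 a 3 prime11 H).
Qed.

Lemma eleven_val a b d : rel_prime a d -> Ez a b d = 0 -> (11 | Tz a b d) ->
  exists t0, Tz a b d = 11 * t0 /\ ~ (11 | t0) /\ (11 | a).
Proof.
  intros Had HE HT. destruct (eleven_ab a b d HE HT) as [[a1 Ha] [b1 Hb]]. subst.
  exists (11*a1*b1 - d^5). split; [unfold Tz; ring|]. split; [|exists a1; reflexivity].
  intros H11.
  assert (Hd5 : (11 | d ^ Z.of_nat 5)).
  { change (Z.of_nat 5) with 5.
    replace (d^5) with (11*a1*b1 - (11*a1*b1 - d^5)) by ring.
    apply Z.divide_sub_r; [|assumption]. exists (a1*b1). ring. }
  apply (prime_pow_div 11 d 5 prime11) in Hd5.
  destruct Had as [_ _ Hg]. assert (H1 : (11 | 1)).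
  { apply Hg; [exists a1; reflexivity|assumption]. }
  apply Z.divide_1_r in H1. lia.
Qed.

Lemma div_one_of_rel t n : (t | n) -> rel_prime t n -> (t | 1).
Proof. intros H [_ _ Hg]. apply Hg; [apply Z.divide_refl|assumption]. Qed.

Lemma div11pow q1 q2 q3 : (11 ^ 11 | (11 * q1) ^ 3 * (121 * q2) ^ 3 * (121 * q3)).
Proof. exists (q1^3*q2^3*q3). ring. Qed.

Lemma YY_lemma t B1 B2 B3 F1 F2 G : (t | F1^3*F2^3*G) ->
  (t | B1 * F1 * (B1 * F1) * (B1 * F1) * (B2 * F2 * (B2 * F2) * (B2 * F2)) * (B3 * G)).
Proof. intros [q Hq]. exists (q * (B1^3*B2^3*B3)).
  transitivity ((B1^3*B2^3*B3) * (F1^3*F2^3*G)); [ring|]. rewrite Hq. ring. Qed.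

Lemma mainZ a b d : rel_prime a d -> rel_prime b d -> Ez a b d = 0 ->
  ((Tz a b d ^ 11 | Hz a b d) <-> (Tz a b d | a * d^3)).
Proof.
  intros Had Hbd HE. pose proof (relT a b d Had Hbd) as RT. split.
  - intros HH.
    assert (HTH : (Tz a b d | Hz a b d)).
    { apply Z.divide_trans with (Tz a b d ^ 11); [|assumption].
      exists (Tz a b d ^ 10). ring. }
    pose proof (cong_cert _ _ _ _ _ _ _ _ (cert_F1 a b d) HE) as C1.
    pose proof (cong_cert _ _ _ _ _ _ _ _ (cert_F2 a b d) HE) as C2.
    pose proof (cong_cert _ _ _ _ _ _ _ _ (cert_G a b d) HE) as C3.
    pose proof (cong_mul _ _ _ _ _ C1 C1) as C11.
    pose proof (cong_mul _ _ _ _ _ C11 C1) as C111.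
    pose proof (cong_mul _ _ _ _ _ C2 C2) as C22.
    pose proof (cong_mul _ _ _ _ _ C22 C2) as C222.
    pose proof (cong_mul _ _ _ _ _ C111 C222) as C6.
    pose proof (cong_mul _ _ _ _ _ C6 C3) as C7.
    match type of C7 with (_ | ?X - ?Y) => set (XX := X) in C7; set (YY := Y) in C7 end.
    assert (HY : (Tz a b d | YY)).
    { subst YY. unfold Hz in HTH. apply YY_lemma. exact HTH. }
    assert (HX : (Tz a b d | XX)).
    { replace XX with ((XX - YY) + YY) by ring. apply Z.divide_add_r; assumption. }
    assert (HX2 : (Tz a b d | 11 ^ Z.of_nat 20 * d ^ Z.of_nat 119)).
    { replace (11 ^ Z.of_nat 20 * d ^ Z.of_nat 119) with XX; [assumption|].
      subst XX. change (Z.of_nat 20) with 20. change (Z.of_nat 119) with 119. ring. }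
    rewrite Z.mul_comm in HX2.
    apply Gauss in HX2; [|apply rel_prime_pow; assumption].
    destruct (Zdivide_dec 11 (Tz a b d)) as [H11|H11].
    + destruct (eleven_val a b d Had HE H11) as [t0 [Ht0 [Hn11 Ha11]]].
      rewrite Ht0 in HX2. rewrite Ht0.
      change (Z.of_nat 20) with (Z.succ (Z.of_nat 19)) in HX2.
      rewrite Z.pow_succ_r in HX2; [|lia].
      apply Z.mul_divide_cancel_l in HX2; [|lia].
      apply div_one_of_rel in HX2.
      * apply Z.divide_trans with (11 * 1); [apply Z.mul_divide_mono_l; assumption|].
        rewrite Z.mul_1_r. apply Z.divide_mul_l. assumption.
      * apply rel_prime_pow. apply rel_prime_sym. apply prime_rel_prime; [exact prime11|assumption].
    + apply div_one_of_rel in HX2.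
      * apply Z.divide_trans with 1; [assumption| apply Z.divide_1_l].
      * apply rel_prime_pow. apply rel_prime_sym. apply prime_rel_prime; [exact prime11|assumption].
  - intros Hd.
    assert (Ha : (Tz a b d | a)).
    { apply Gauss with (d ^ Z.of_nat 3); [|apply rel_prime_pow; assumption].
      change (Z.of_nat 3) with 3. rewrite Z.mul_comm. assumption. }
    assert (H11 : (Tz a b d | 11)).
    { apply Gauss with (d ^ Z.of_nat 5); [|apply rel_prime_pow; assumption].
      change (Z.of_nat 5) with 5.
      replace (d^5 * 11) with (a*b - Tz a b d) by (unfold Tz; ring).
      apply Z.divide_sub_r; [apply Z.divide_mul_l; assumption| apply Z.divide_refl]. }
    destruct (prime_divisors 11 prime11 _ H11) as [Ht|[Ht|[Ht|Ht]]].
    + rewrite Ht. exists (- Hz a b d). ring.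
    + rewrite Ht. exists (Hz a b d). ring.
    + assert (H11' : (11 | Tz a b d)) by (rewrite Ht; apply Z.divide_refl).
      destruct (eleven_ab a b d HE H11') as [[a1 Ha1] [b1 Hb1]].
      rewrite Ht. unfold Hz. rewrite Ha1 Hb1.
      rewrite (Z.mul_comm a1 11) (Z.mul_comm b1 11) div11_F1 div11_F2 div11_G.
      apply div11pow.
    + assert (H11' : (11 | Tz a b d)) by (rewrite Ht; exists (-1); ring).
      destruct (eleven_ab a b d HE H11') as [[a1 Ha1] [b1 Hb1]].
      rewrite Ht. unfold Hz. rewrite Ha1 Hb1.
      rewrite (Z.mul_comm a1 11) (Z.mul_comm b1 11) div11_F1 div11_F2 div11_G.
      replace ((Z.opp 11)^11) with (- (11^11)) by ring. apply Zdivide_opp_l. apply div11pow.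
Qed.

Lemma relp_add_mul x y k : rel_prime x y -> rel_prime (x + k*y) y.
Proof.
  intros H. apply Zgcd_1_rel_prime. rewrite Z.gcd_comm Z.gcd_add_mult_diag_r Z.gcd_comm.
  apply Zgcd_1_rel_prime. exact H.
Qed.

Lemma cube_square m s n r : 0 < m -> 0 < s -> rel_prime n m -> rel_prime r s ->
  m^3*(r^2+11*r*s) = s^2*(n^3 + 11*n^2 * m + 33*n * m^2) ->
  exists d, 0 < d /\ m = d^2 /\ s = d^3.
Proof.
  intros Hm Hs Hnm Hrs Heq.
  assert (RX : rel_prime (s ^ Z.of_nat 2) (r^2+11*r*s)).
  { apply rel_prime_sym. apply rel_prime_pow.
    replace (r^2+11*r*s) with (r * (r + 11*s)) by ring.
    apply rel_prime_sym. apply rel_prime_mult; apply rel_prime_sym; [assumption|].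
    apply relp_add_mul. assumption. }
  assert (RY : rel_prime (m ^ Z.of_nat 3) (n^3 + 11*n^2 * m + 33*n * m^2)).
  { apply rel_prime_sym. apply rel_prime_pow.
    replace (n^3 + 11*n^2 * m + 33*n * m^2) with (n^3 + (11*n^2 + 33*n * m) * m) by ring.
    apply relp_add_mul. apply rel_prime_sym. change (n^3) with (n^Z.of_nat 3). apply rel_prime_pow.
    apply rel_prime_sym. assumption. }
  change (Z.of_nat 2) with 2 in RX. change (Z.of_nat 3) with 3 in RY.
  assert (D1 : (s^2 | m^3)).
  { apply Gauss with (r^2+11*r*s); [|assumption]. rewrite Z.mul_comm Heq. apply Z.divide_mul_l, Z.divide_refl. }
  assert (D2 : (m^3 | s^2)).
  { apply Gauss with (n^3 + 11*n^2 * m + 33*n * m^2); [|assumption]. rewrite Z.mul_comm -Heq. apply Z.divide_mul_l, Z.divide_refl. }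
  assert (E : m^3 = s^2).
  { apply Z.divide_antisym_nonneg; try assumption; apply Z.pow_nonneg; lia. }
  set (g := Z.gcd m s).
  assert (Hg : 0 < g).
  { pose proof (Z.gcd_nonneg m s). assert (g <> 0) by (intro H0; apply Z.gcd_eq_0 in H0; lia). unfold g in *. lia. }
  pose proof (Zgcd_is_gcd m s) as Gis.
  assert (Hm1 : m = g * (m / g)).
  { apply Zdivide_Zdiv_eq; [assumption|]. apply Z.gcd_divide_l. }
  assert (Hs1 : s = g * (s / g)).
  { apply Zdivide_Zdiv_eq; [assumption|]. apply Z.gcd_divide_r. }
  pose proof (Zis_gcd_rel_prime m s g ltac:(lia) ltac:(lia) Gis) as R1.
  set (m1 := m / g) in *. set (s1 := s / g) in *.
  assert (E2 : g * m1^3 = s1^2).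
  { apply (Z.mul_reg_l _ _ (g^2)); [lia|].
    transitivity (m^3); [rewrite Hm1; ring|]. rewrite E Hs1. ring. }
  assert (Hm1pos : 0 < m1) by (rewrite Hm1 in Hm; apply (Z.mul_pos_cancel_l g m1 Hg); exact Hm).
  assert (U : (m1 | 1)).
  { apply div_one_of_rel with (s1 ^ Z.of_nat 2).
    - change (Z.of_nat 2) with 2. rewrite <- E2. exists (g * m1^2). ring.
    - apply rel_prime_pow. assumption. }
  apply Z.divide_1_r in U. assert (m1 = 1) by lia.
  assert (Eg : g = s1^2) by (rewrite <- E2; rewrite H; ring).
  exists s1. split.
  - rewrite Hs1 in Hs. apply (Z.mul_pos_cancel_l g s1 Hg); exact Hs.
  - split.
    + rewrite Hm1 H Eg. ring.
    + rewrite Hs1 Eg. ring.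
Qed.

Lemma paramZ m s n r : 0 < m -> 0 < s -> rel_prime n m -> rel_prime r s ->
  m^3*(r^2+11*r*s) = s^2*(n^3 + 11*n^2 * m + 33*n * m^2) ->
  exists d, 0 < d /\ m = d^2 /\ s = d^3 /\ rel_prime n d /\ rel_prime r d /\ Ez n r d = 0.
Proof.
  intros Hm Hs Hnm Hrs Heq.
  destruct (cube_square m s n r Hm Hs Hnm Hrs Heq) as [d [Hd [Em Es]]].
  exists d. split; [assumption|]. split; [assumption|]. split; [assumption|].
  split; [|split].
  - apply rel_prime_sym. apply rel_prime_div with m; [apply rel_prime_sym; assumption|].
    rewrite Em. exists d. ring.
  - apply rel_prime_sym. apply rel_prime_div with s; [apply rel_prime_sym; assumption|].
    rewrite Es. exists (d^2). ring.
  - subst m s. apply (Z.mul_reg_l _ _ (d^6)); [lia|].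
    transitivity ((d^2)^3*(r^2+11*r*d^3) - (d^3)^2*(n^3 + 11*n^2*d^2 + 33*n*(d^2)^2)).
    + unfold Ez. ring.
    + rewrite Heq. ring.
Qed.

Definition cL (m r s : Z) : Z := m^3*(r^2+11*r*s).
Definition cR (m s n : Z) : Z := s^2*(n^3 + 11*n^2 * m + 33*n * m^2).

Lemma paramZ' m s n r : 0 < m -> 0 < s -> rel_prime n m -> rel_prime r s -> cL m r s = cR m s n ->
  exists d, 0 < d /\ m = d^2 /\ s = d^3 /\ rel_prime n d /\ rel_prime r d /\ Ez n r d = 0.
Proof. intros; apply paramZ; assumption. Qed.
Close Scope Z_scope.
Local Open Scope ring_scope.

Definition zr (z : Z) : rat := (int_of_Z z)%:~R.

Lemma ioZD (x y : Z) : int_of_Z (Z.add x y) = int_of_Z x + int_of_Z y.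
Proof. exact: (rmorphD int_of_Z x y). Qed.
Lemma ioZM (x y : Z) : int_of_Z (Z.mul x y) = int_of_Z x * int_of_Z y.
Proof. exact: (rmorphM int_of_Z x y). Qed.
Lemma ioZN (x : Z) : int_of_Z (Z.opp x) = - int_of_Z x.
Proof. exact: (rmorphN int_of_Z x). Qed.

Lemma zrD x y : zr (Z.add x y) = zr x + zr y.
Proof. by rewrite /zr ioZD intrD. Qed.
Lemma zrM x y : zr (Z.mul x y) = zr x * zr y.
Proof. by rewrite /zr ioZM intrM. Qed.
Lemma zrN x : zr (Z.opp x) = - zr x.
Proof. by rewrite /zr ioZN intrN. Qed.
Lemma zrB x y : zr (Z.sub x y) = zr x - zr y.
Proof. by change (Z.sub x y) with (Z.add x (Z.opp y)); rewrite zrD zrN. Qed.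
Lemma zr0 : zr Z0 = 0. Proof. by []. Qed.
Lemma zr1 : zr (Zpos xH) = 1. Proof. by []. Qed.
Lemma zr_pownat x (n : nat) : zr (Z.pow x (Z.of_nat n)) = zr x ^+ n.
Proof.
elim: n => [|n IH]; first by rewrite expr0.
by rewrite Nat2Z.inj_succ Z.pow_succ_r ?zrM ?IH ?exprS //; lia.
Qed.
Lemma zr_pow x (p : positive) : zr (Z.pow x (Zpos p)) = zr x ^+ Pos.to_nat p.
Proof. by rewrite -zr_pownat positive_nat_Z. Qed.

Lemma posqE p : posq p = (Pos.to_nat p)%:R.
Proof.
elim: p => [p IH|p IH|] /=.
- have -> : Pos.to_nat p~1 = (2 * Pos.to_nat p)%N.+1 by lia.
  by rewrite IH -[(_ * _)%N.+1]addn1 natrD natrM.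
- have -> : Pos.to_nat p~0 = (2 * Pos.to_nat p)%N by lia.
  by rewrite IH natrM.
- by [].
Qed.
Lemma zr_pos p : zr (Zpos p) = posq p.
Proof. by rewrite posqE /zr /=. Qed.
Lemma zr_inj x y : zr x = zr y -> x = y.
Proof. by move/intr_inj/(can_inj int_of_ZK). Qed.
Lemma zr_int x : zr x \is a Num.int.
Proof. exact: intr_int. Qed.
Lemma zr_eq0 x : (zr x == 0) = (x == Z0).
Proof. apply/eqP/eqP => [|->//]. by move/(zr_inj x Z0). Qed.

Lemma int_div (p q : Z) : q <> Z0 -> (zr p / zr q \is a Num.int) <-> Z.divide q p.
Proof.
move=> q0; have zq : zr q != 0 by rewrite zr_eq0; apply/eqP.
split.
- case/intrP => k hk. exists (Z_of_int k).
  apply: zr_inj. rewrite zrM.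
  have -> : zr (Z_of_int k) = k%:~R by rewrite /zr Z_of_intK.
  by rewrite -hk divfK.
- case=> k ->. by rewrite zrM mulfK // zr_int.
Qed.

Ltac redpos := repeat match goal with |- context [Pos.to_nat ?p] =>
  let n := eval vm_compute in (Pos.to_nat p) in change (Pos.to_nat p) with n end.

Ltac genposq := repeat match goal with |- context [posq ?p] =>
  let c := fresh "c" in generalize (posq p); intro c end.

Lemma F1_rat a b d : zr d != 0 ->
  let X := zr a / zr d ^+ 2 in (X ^+ 2 + 11 * X + 22) * zr d ^+ 4 = zr (F1z a b d).
Proof.
move=> d0 X; rewrite /X /F1z.
rewrite !(zrD, zrM, zrB, zr_pow, zr_pos).
rewrite !(posqE 11%positive) !(posqE 22%positive).
redpos. genposq.
field. done.
Qed.

Lemma F2_rat a b d : zr d != 0 ->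
  let X := zr a / zr d ^+ 2 in let Y := zr b / zr d ^+ 3 in
  ((11 * X ^+ 2 + 88 * X + 121) * Y
     + 2 * X ^+ 4 + 55 * X ^+ 3 + 451 * X ^+ 2 + (nq 1452) * X + (nq 1452)) * zr d ^+ 8
  = zr (F2z a b d).
Proof.
move=> d0 X Y; rewrite /X /Y /F2z /nq.
rewrite !(zrD, zrM, zrB, zr_pow, zr_pos).
rewrite !(posqE 11%positive) !(posqE 88%positive) !(posqE 121%positive) !(posqE 2%positive)
  !(posqE 55%positive) !(posqE 451%positive).
redpos. genposq.
field. done.
Qed.

Lemma G_rat a b d : zr d != 0 ->
  let X := zr a / zr d ^+ 2 in let Y := zr b / zr d ^+ 3 in
  g_poly X Y * zr d ^+ 19 = zr (Gz a b d).
Proof.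
move=> d0 X Y; rewrite /X /Y /Gz /g_poly /nq.
rewrite !(zrD, zrM, zrB, zr_pow, zr_pos).
redpos. genposq.
field. done.
Qed.

Lemma T_rat a b d : zr d != 0 ->
  let X := zr a / zr d ^+ 2 in let Y := zr b / zr d ^+ 3 in
  (X * Y - 11) * zr d ^+ 5 = zr (Tz a b d).
Proof.
move=> d0 X Y; rewrite /X /Y /Tz.
rewrite !(zrD, zrM, zrB, zr_pow, zr_pos).
rewrite !(posqE 11%positive).
redpos. genposq.
field. done.
Qed.

Lemma F1_rat' a b d : zr d != 0 ->
  ((zr a / zr d ^+ 2) ^+ 2 + 11 * (zr a / zr d ^+ 2) + 22) * zr d ^+ 4 = zr (F1z a b d).
Proof. exact: F1_rat. Qed.
Lemma F2_rat' a b d : zr d != 0 ->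
  ((11 * (zr a / zr d ^+ 2) ^+ 2 + 88 * (zr a / zr d ^+ 2) + 121) * (zr b / zr d ^+ 3)
     + 2 * (zr a / zr d ^+ 2) ^+ 4 + 55 * (zr a / zr d ^+ 2) ^+ 3 + 451 * (zr a / zr d ^+ 2) ^+ 2 + (nq 1452) * (zr a / zr d ^+ 2) + (nq 1452)) * zr d ^+ 8
  = zr (F2z a b d).
Proof. exact: F2_rat. Qed.
Lemma G_rat' a b d : zr d != 0 -> g_poly (zr a / zr d ^+ 2) (zr b / zr d ^+ 3) * zr d ^+ 19 = zr (Gz a b d).
Proof. exact: G_rat. Qed.
Lemma T_rat' a b d : zr d != 0 -> ((zr a / zr d ^+ 2) * (zr b / zr d ^+ 3) - 11) * zr d ^+ 5 = zr (Tz a b d).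
Proof. exact: T_rat. Qed.

Lemma h_rat a b d : zr d != 0 ->
  h_poly (zr a / zr d ^+ 2) (zr b / zr d ^+ 3) * zr d ^+ 55 = zr (Hz a b d).
Proof.
move=> d0.
have e : forall u v w D : rat, u ^+ 3 * v ^+ 3 * w * D ^+ 55 = (u * D ^+ 4) ^+ 3 * (v * D ^+ 8) ^+ 3 * (w * D ^+ 19).
  by move=> u v w D; ring.
rewrite /h_poly e.
rewrite /Hz !(zrM, zr_pow) -(F1_rat' a b d d0) -(F2_rat' a b d d0) -(G_rat' a b d d0).
by redpos.
Qed.
Ltac fside := repeat (apply/andP; split); try done.

Lemma zrZ (i : int) : zr (Z_of_int i) = i%:~R.
Proof. by rewrite /zr Z_of_intK. Qed.

Lemma relp_numden (x : rat) : rel_prime (Z_of_int (numq x)) (Z_of_int (denq x)).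
Proof.
apply Zgcd_1_rel_prime. have := coprime_num_den x. rewrite /coprime => /eqP h.
rewrite -Z.gcd_abs_l -Z.gcd_abs_r. lia.
Qed.

Lemma den_pos (x : rat) : Z.lt Z0 (Z_of_int (denq x)).
Proof. have := denq_gt0 x. lia. Qed.

Lemma param x y : onE x y -> exists a b d : Z, rel_prime a d /\ rel_prime b d /\ Ez a b d = Z0 /\
  zr d != 0 /\ x = zr a / zr d ^+ 2 /\ y = zr b / zr d ^+ 3.
Proof.
move=> hE.
set n := Z_of_int (numq x); set m := Z_of_int (denq x).
set r := Z_of_int (numq y); set s := Z_of_int (denq y).
have hx : x = zr n / zr m by rewrite !zrZ divq_num_den.
have hy : y = zr r / zr s by rewrite !zrZ divq_num_den.
have m0 := den_pos x. have s0 := den_pos y.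
have zm : zr m != 0 by rewrite zr_eq0; apply/eqP; lia.
have zs : zr s != 0 by rewrite zr_eq0; apply/eqP; lia.
have eqZ : cL m r s = cR m s n.
  apply: zr_inj. rewrite /cL /cR.
  rewrite !(zrD, zrM, zrB, zr_pow, zr_pos) !(posqE 11%positive) !(posqE 33%positive).
  redpos.
  move: hE zm zs; rewrite /onE hx hy.
  generalize (zr m) (zr s) (zr n) (zr r) => M S N R hE zm zs.
  apply/eqP; rewrite -subr_eq0.
  have -> : M ^+ 3 * (R ^+ 2 + 11%:R * R * S) -
    S ^+ 2 * (N ^+ 3 + 11%:R * N ^+ 2 * M + 33%:R * N * M ^+ 2) =
    M ^+ 3 * S ^+ 2 * (((R / S) ^+ 2 + 11 * (R / S)) -
      ((N / M) ^+ 3 + 11 * (N / M) ^+ 2 + 33 * (N / M))).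
    field. by fside.
  by rewrite hE subrr mulr0.
have [d [d0 [md [sd [rnd [rrd Ed]]]]]] := paramZ' m s n r m0 s0 (relp_numden x) (relp_numden y) eqZ.
exists n, r, d. split; first by []. split; first by []. split; first by [].
have zd : zr d != 0 by rewrite zr_eq0; apply/eqP; lia.
split; first by [].
split.
- by rewrite hx md zr_pow.
- by rewrite hy sd zr_pow.
Qed.

Theorem theorem4p1 (x y : rat) :
  onE x y -> (j_integral x y <-> u_integral x y).
Proof.
move=> /param [a [b [d [ad [bd [Ed [d0 [-> ->]]]]]]]].
set X := zr a / zr d ^+ 2; set Y := zr b / zr d ^+ 3.
have d5 : zr d ^+ 5 != 0 by rewrite expf_neq0.
have eT : X * Y - 11 = zr (Tz a b d) / zr d ^+ 5.
  by rewrite -(T_rat' a b d d0) mulfK.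
have eH : h_poly X Y = zr (Hz a b d) / zr d ^+ 55.
  by rewrite -(h_rat a b d d0) mulfK // expf_neq0.
rewrite /j_integral /u_integral.
have [T0|T0] := eqVneq (Tz a b d) Z0.
  rewrite eT T0 zr0 mul0r. by split; case.
have zT : zr (Tz a b d) != 0 by rewrite zr_eq0.
have tne : X * Y - 11 <> 0 by rewrite eT; apply/eqP; rewrite mulf_neq0 // invr_neq0.
have ej : j_val X Y = zr (Hz a b d) / zr (Z.pow (Tz a b d) 11).
  rewrite /j_val eH eT zr_pow. redpos. field. by fside.
have eu : X / (X * Y - 11) = zr (Z.mul a (Z.pow d 3)) / zr (Tz a b d).
  rewrite eT zrM zr_pow. redpos. rewrite /X. field. by fside.
have T11 : Z.pow (Tz a b d) 11 <> Z0.
  by apply: Z.pow_nonzero => //; apply/eqP.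
rewrite ej eu.
rewrite (int_div _ _ T11) (int_div _ _ (elimN eqP T0)) (mainZ a b d ad bd Ed).
split; case=> _ h; split => //.
Qed.
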